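(* Let $\mu$ be a singular cardinal with $\aleph_0<\kappa=\operatorname{cf}(\mu)<\mu$ and $\lambda=\mu^+$. Let $\langle S_i:i<\kappa\rangle$ be pairwise disjoint stationary subsets of $\{\delta<\lambda:\operatorname{cf}(\delta)=\kappa\}$, and for each $i<\kappa$ let $\bar C^i=\langle C^i_\delta:\delta\in S_i\rangle$ be an $S_i$-club system such that $\lambda\notin\mathrm{id}_p(\bar C^i,\bar J^i)$, where $\bar J^i=\langle J^{b[\mu]}_{C^i_\delta}:\delta\in S_i\rangle$, and $\operatorname{otp}(C^i_\delta)=\kappa$ for every $\delta\in S_i$. Then there is a $\lambda$-club system $\bar e=\langle e_\beta:\beta<\lambda\text{ limit}\rangle$ such that $|e_\beta|\leq\operatorname{cf}(\beta)+\operatorname{cf}(\mu)$ for each $\beta$, and for every $i<\kappa$, every limit $\beta<\lambda$ and every $\delta\in S_i\cap(e_\beta\cup\{\beta\})$, we have $C^i_\delta\subseteq e_\beta$.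
   Context: An $S$-club system is a sequence $\langle C_\delta:\delta\in S\rangle$ with each $C_\delta$ a closed unbounded subset of $\delta$; a $\lambda$-club system is such a sequence indexed by all limit ordinals $\beta<\lambda$. $\operatorname{nacc}(C)$ denotes the non-accumulation points of $C$. $J^{b[\mu]}_{C_\delta}$ is the ideal of $A\subseteq C_\delta$ for which there exist a cardinal $\theta<\mu$ and $\gamma<\delta$ such that every $\beta\in A\cap\operatorname{nacc}(C_\delta)$ has $\beta<\gamma$ or $\operatorname{cf}(\beta)<\theta$. $\mathrm{id}_p(\bar C,\bar J)$ is the ideal of those $A\subseteq\lambda$ for which there is a club $E\subseteq\lambda$ with $E\cap C_\delta\in J_\delta$ for all $\delta\in A\cap S$. *)

(* Defs.v *)
(* Ordinals below lambda = mu^+ are modelled as the elements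
   of a type T equipped with a well-order lt; all cardinals/ordinals of the
   statement are < lambda, hence elements of T. *)
From Stdlib Require Import Classical.

Section Ord.
Context {T : Type} (lt : T -> T -> Prop).

Definition le (x y : T) : Prop := x = y \/ lt x y.

Definition well_order : Prop :=
  (forall x, ~ lt x x) /\
  (forall x y z, lt x y -> lt y z -> lt x z) /\
  (forall x y, lt x y \/ x = y \/ lt y x) /\
  well_founded lt.

Definition seg (a : T) : T -> Prop := fun x => lt x a.

Definition card_le (P Q : T -> Prop) : Prop :=
  exists f : {x | P x} -> {y | Q y}, forall u v, f u = f v -> u = v.

Definition card_le_sum (P Q1 Q2 : T -> Prop) : Prop :=
  exists f : {x | P x} -> ({y | Q1 y} + {y | Q2 y})%type,
    forall u v, f u = f v -> u = v.

Definition is_cardinal (a : T) : Prop :=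
  forall b, lt b a -> ~ card_le (seg a) (seg b).

(* The whole of T has order type m^+ : m is a cardinal, every proper
   initial segment of T has size <= |m|, and T itself has size > |m|. *)
Definition is_successor_of (m : T) : Prop :=
  is_cardinal m /\ (forall x, card_le (seg x) (seg m)) /\
  ~ card_le (fun _ => True) (seg m).

Definition is_limit (b : T) : Prop :=
  (exists y, lt y b) /\ (forall y, lt y b -> exists z, lt y z /\ lt z b).

Definition is_omega (w : T) : Prop :=
  is_limit w /\ forall v, is_limit v -> ~ lt v w.

Definition cofinal_map (r b : T) : Prop :=
  exists f : T -> T, (forall x, lt x r -> lt (f x) b) /\
    (forall y, lt y b -> exists x, lt x r /\ le y (f x)).

Definition cof (b r : T) : Prop :=
  cofinal_map r b /\ forall r', lt r' r -> ~ cofinal_map r' b.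

Definition unbounded_below (E : T -> Prop) (b : T) : Prop :=
  forall x, lt x b -> exists y, E y /\ lt x y /\ lt y b.

Definition club_in (E : T -> Prop) (d : T) : Prop :=
  (forall x, E x -> lt x d) /\ unbounded_below E d /\
  (forall g, lt g d -> is_limit g -> unbounded_below E g -> E g).

Definition club (E : T -> Prop) : Prop :=
  (forall x, exists y, E y /\ lt x y) /\
  (forall g, is_limit g -> unbounded_below E g -> E g).

Definition stationary (S : T -> Prop) : Prop :=
  forall E, club E -> exists x, S x /\ E x.

Definition acc_point (C : T -> Prop) (b : T) : Prop :=
  (exists g, lt g b) /\ unbounded_below C b.

Definition nacc (C : T -> Prop) (b : T) : Prop := C b /\ ~ acc_point C b.

Definition J_b (mu : T) (C : T -> Prop) (delta : T) (A : T -> Prop) : Prop :=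
  (forall x, A x -> C x) /\
  exists theta, is_cardinal theta /\ lt theta mu /\
  exists g, lt g delta /\
    forall b, A b -> nacc C b -> lt b g \/ exists r, cof b r /\ lt r theta.

Definition in_id_p (S : T -> Prop) (C : T -> T -> Prop)
    (J : T -> (T -> Prop) -> Prop) (A : T -> Prop) : Prop :=
  exists E, club E /\
    forall d, A d -> S d -> J d (fun x => E x /\ C d x).

Definition otp_eq (C : T -> Prop) (k : T) : Prop :=
  exists f : T -> T,
    (forall x y, lt x k -> lt y k -> lt x y -> lt (f x) (f y)) /\
    (forall x, lt x k -> C (f x)) /\
    (forall y, C y -> exists x, lt x k /\ f x = y).

End Ord.

(* Main.v *)
Require Import Defs.
From Stdlib Require Import Classical ClassicalEpsilon FunctionalExtensionality PropExtensionality ProofIrrelevance Cantor Lia.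

Section W.
Context {T : Type} (lt : T -> T -> Prop) (Hwo : well_order lt).

Lemma lt_irr x : ~ lt x x. Proof. apply Hwo. Qed.
Lemma lt_trans x y z : lt x y -> lt y z -> lt x z. Proof. apply Hwo. Qed.
Lemma lt_tri x y : lt x y \/ x = y \/ lt y x. Proof. apply Hwo. Qed.
Lemma lt_wf : well_founded lt. Proof. apply Hwo. Qed.

Lemma lt_asym x y : lt x y -> ~ lt y x.
Proof. intros H1 H2. exact (lt_irr x (lt_trans _ _ _ H1 H2)). Qed.
Lemma le_lt_trans x y z : le lt x y -> lt y z -> lt x z.
Proof. intros [->|H] H2; [auto| eapply lt_trans; eauto]. Qed.
Lemma lt_le_trans x y z : lt x y -> le lt y z -> lt x z.
Proof. intros H [<-|H2]; [auto| eapply lt_trans; eauto]. Qed.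
Lemma le_trans x y z : le lt x y -> le lt y z -> le lt x z.
Proof. intros [->|H] H2; auto. right. eapply lt_le_trans; eauto. Qed.
Lemma not_lt_le x y : ~ lt x y -> le lt y x.
Proof. intros H. destruct (lt_tri x y) as [h|[h|h]]; [tauto| left; auto | right; auto]. Qed.
Lemma lt_not_le x y : lt x y -> ~ le lt y x.
Proof. intros H [->|H2]. apply (lt_irr _ H). apply (lt_asym _ _ H H2). Qed.
Lemma le_refl x : le lt x x. Proof. left; auto. Qed.

Lemma least_ex (P : T -> Prop) : (exists x, P x) -> exists m, P m /\ forall y, P y -> ~ lt y m.
Proof.
  intros [x Hx]. apply NNPP; intro Hn.
  assert (forall y, ~ P y).
  { intro y. induction y as [y IH] using (well_founded_ind lt_wf).
    intro Py. apply Hn. exists y. split; auto. intros u Pu Hu. exact (IH u Hu Pu). }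
  exact (H x Hx).
Qed.

Definition leastT (i : inhabited T) (P : T -> Prop) : T :=
  epsilon i (fun m => P m /\ forall y, P y -> le lt m y).

Lemma leastT_spec i P : (exists x, P x) -> P (leastT i P) /\ forall y, P y -> le lt (leastT i P) y.
Proof.
  intros Hx. unfold leastT. apply epsilon_spec.
  destruct (least_ex P Hx) as [m [Pm Hm]]. exists m. split; auto.
  intros y Py. apply not_lt_le. auto.
Qed.

Definition injP {X Y} (P : X -> Prop) (Q : Y -> Prop) :=
  exists f : X -> Y, (forall x, P x -> Q (f x)) /\ (forall x y, P x -> P y -> f x = f y -> x = y).

Lemma injP_trans {X Y Z} (P : X -> Prop) (Q : Y -> Prop) (R : Z -> Prop) :
  injP P Q -> injP Q R -> injP P R.
Proof.
  intros [f [f1 f2]] [g [g1 g2]]. exists (fun x => g (f x)). split; auto.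
Qed.
Lemma injP_sub {X Y} (P P' : X -> Prop) (Q : Y -> Prop) :
  (forall x, P x -> P' x) -> injP P' Q -> injP P Q.
Proof. intros HP [f [f1 f2]]. exists f. split; auto. Qed.
Lemma injP_sub2 {X Y} (P : X -> Prop) (Q Q' : Y -> Prop) :
  (forall x, Q x -> Q' x) -> injP P Q -> injP P Q'.
Proof. intros HQ [f [f1 f2]]. exists f. split; auto. Qed.

Lemma seg_sub a b : le lt a b -> forall x, seg lt a x -> seg lt b x.
Proof. unfold seg. intros. eapply lt_le_trans; eauto. Qed.

Section Om.
Context (w : T) (Hw : is_omega lt w).

Lemma w_inh : inhabited T. Proof. exact (inhabits w). Qed.

Definition zz : T := leastT w_inh (fun _ => True).
Lemma zz_least y : le lt zz y.
Proof. apply (leastT_spec w_inh (fun _ => True)); eauto. Qed.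
Lemma zz_lt_w : lt zz w.
Proof. destruct Hw as [[[y Hy] _] _]. eapply le_lt_trans; [apply zz_least| eauto]. Qed.

Definition succ (x : T) : T := leastT w_inh (fun s => lt x s).
Lemma succ_spec x : (exists y, lt x y) -> lt x (succ x) /\ forall y, lt x y -> le lt (succ x) y.
Proof. intros H. apply (leastT_spec w_inh (fun s => lt x s)); auto. Qed.
Lemma succ_lt_w x : lt x w -> lt (succ x) w.
Proof.
  intros H. destruct Hw as [[_ Hl] _]. destruct (Hl x H) as [z [h1 h2]].
  destruct (succ_spec x) as [_ h]; eauto. eapply le_lt_trans; eauto.
Qed.
Lemma succ_gt_w x : lt x w -> lt x (succ x).
Proof. intros H. apply succ_spec. eauto. Qed.

Fixpoint emb (n : nat) : T := match n with 0 => zz | Datatypes.S n => succ (emb n) end.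
Lemma emb_lt_w n : lt (emb n) w.
Proof. induction n; simpl. apply zz_lt_w. apply succ_lt_w; auto. Qed.
Lemma emb_mono n m : (n < m)%nat -> lt (emb n) (emb m).
Proof.
  induction 1; simpl. apply succ_gt_w, emb_lt_w.
  eapply lt_trans; eauto. apply succ_gt_w, emb_lt_w.
Qed.
Lemma emb_inj n m : emb n = emb m -> n = m.
Proof.
  intros E. destruct (PeanoNat.Nat.lt_total n m) as [h|[h|h]]; auto.
  - apply emb_mono in h. rewrite E in h. destruct (lt_irr _ h).
  - apply emb_mono in h. rewrite E in h. destruct (lt_irr _ h).
Qed.
Lemma emb_surj x : lt x w -> exists n, emb n = x.
Proof.
  induction x as [x IH] using (well_founded_ind lt_wf). intros Hx.
  destruct Hw as [Hlw Hmin].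
  assert (Hnl : ~ is_limit lt x) by (intro L; exact (Hmin x L Hx)).
  destruct (classic (exists y, lt y x)) as [[y0 Hy0]|Hno].
  - assert (exists y, lt y x /\ forall z, ~ (lt y z /\ lt z x)) as [y [Hy Hyz]].
    { apply NNPP; intro C. apply Hnl. split; eauto. intros y Hy.
      apply NNPP; intro C2. apply C. exists y. split; auto. intros z Hz. apply C2; eauto. }
    assert (Hyw : lt y w) by (eapply lt_trans; eauto).
    destruct (IH y Hy Hyw) as [n Hn]. exists (Datatypes.S n). simpl. rewrite Hn.
    destruct (succ_spec y) as [s1 s2]; eauto.
    destruct (s2 x Hy) as [h|h]; auto. exfalso. apply (Hyz (succ y)); auto.
  - exists 0%nat. simpl. destruct (zz_least x) as [h|h]; auto. exfalso; eauto.
Qed.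

Definition Nw (t : T) : nat := epsilon (inhabits 0%nat) (fun n => emb n = t).
Lemma Nw_spec t : lt t w -> emb (Nw t) = t.
Proof. intros H. unfold Nw. apply epsilon_spec. apply emb_surj; auto. Qed.
Lemma Nw_emb n : Nw (emb n) = n.
Proof. apply emb_inj. apply Nw_spec. apply emb_lt_w. Qed.


Definition sq (a : T) (p : T * T) : Prop := lt (fst p) a /\ lt (snd p) a.

Lemma hess_base : injP (sq w) (seg lt w).
Proof.
  exists (fun p => emb (to_nat (Nw (fst p), Nw (snd p)))). split.
  - intros; apply emb_lt_w.
  - intros [a b] [c d] [h1 h2] [h3 h4] E. simpl fst in *; simpl snd in *.
    apply emb_inj in E. apply (f_equal of_nat) in E. rewrite !cancel_of_to in E.
    injection E as E1 E2.
    rewrite <- (Nw_spec a), <- (Nw_spec b), <- (Nw_spec c), <- (Nw_spec d); auto.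
    rewrite E1, E2. auto.
Qed.

Definition gm (p : T * T) : T := if excluded_middle_informative (lt (fst p) (snd p)) then snd p else fst p.
Lemma gm_fst p : le lt (fst p) (gm p).
Proof. unfold gm. destruct excluded_middle_informative; [right|left]; auto. Qed.
Lemma gm_snd p : le lt (snd p) (gm p).
Proof. unfold gm. destruct excluded_middle_informative; [left|]; auto. apply not_lt_le; auto. Qed.
Lemma gm_sq a p : lt (gm p) a -> sq a p.
Proof. intros H. split; eapply le_lt_trans; eauto using gm_fst, gm_snd. Qed.
Lemma sq_gm a p : sq a p -> lt (gm p) a.
Proof. unfold gm, sq. intros [h1 h2]. destruct excluded_middle_informative; auto. Qed.

Definition god (p q : T * T) : Prop :=
  lt (gm p) (gm q) \/ (gm p = gm q /\ (lt (fst p) (fst q) \/ (fst p = fst q /\ lt (snd p) (snd q)))).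

Lemma god_wf : well_founded god.
Proof.
  assert (forall m a b, gm (a, b) = m -> Acc god (a, b)).
  { intro m. induction m as [m IHm] using (well_founded_ind lt_wf).
    intro a. induction a as [a IHa] using (well_founded_ind lt_wf).
    intro b. induction b as [b IHb] using (well_founded_ind lt_wf).
    intros Hm. constructor. intros [c d] Hg. unfold god in Hg; simpl in Hg.
    destruct Hg as [H|[H [H1|[H1 H2]]]].
    - rewrite Hm in H. eapply IHm; eauto.
    - eapply IHa; eauto. congruence.
    - subst c. apply IHb; auto. congruence. }
  intros [a b]. eauto.
Qed.

Lemma god_trans p q s : god p q -> god q s -> god p s.
Proof.
  unfold god. intros [H|[H H']] [G|[G G']].
  - left; eapply lt_trans; eauto.
  - left. rewrite <- G; auto.
  - left. rewrite H; auto.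
  - right. split; [congruence|].
    destruct H' as [h|[h h']]; destruct G' as [g|[g g']].
    + left; eapply lt_trans; eauto.
    + left; rewrite <- g; auto.
    + left; rewrite h; auto.
    + right; split; [congruence| eapply lt_trans; eauto].
Qed.

Lemma god_tri p q : p <> q -> god p q \/ god q p.
Proof.
  intros Hne. unfold god.
  destruct (lt_tri (gm p) (gm q)) as [h|[h|h]]; auto.
  destruct (lt_tri (fst p) (fst q)) as [h1|[h1|h1]]; auto.
  - destruct (lt_tri (snd p) (snd q)) as [h2|[h2|h2]].
    + left; right; split; auto.
    + exfalso. apply Hne. destruct p, q; simpl in h1, h2. subst. reflexivity.
    + right; right; split; auto.
Qed.

Lemma god_le p q : god p q -> le lt (gm p) (gm q).
Proof. intros [h|[h _]]; [right|left]; auto. Qed.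

Definition Fgod (p : T * T) : T :=
  Fix god_wf (fun _ => T) (fun p rec => leastT w_inh (fun t => forall q (H : god q p), lt (rec q H) t)) p.

Lemma Fgod_eq p : Fgod p = leastT w_inh (fun t => forall q, god q p -> lt (Fgod q) t).
Proof.
  unfold Fgod at 1. rewrite Fix_eq.
  - reflexivity.
  - intros x f g Hfg. assert (f = g) as ->.
    { apply functional_extensionality_dep; intro y. apply functional_extensionality_dep; intro h. auto. }
    reflexivity.
Qed.

Lemma w_limit : is_limit lt w. Proof. apply Hw. Qed.

Theorem hess a : le lt w a -> injP (sq a) (seg lt a).
Proof.
  induction a as [a IHa] using (well_founded_ind lt_wf).
  intros [<-|Hwa]; [apply hess_base|].
  destruct (classic (exists g, le lt w g /\ lt g a /\ injP (seg lt a) (seg lt g))) as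
    [[g [Hwg [Hga Hinj]]]|H2].
  - destruct Hinj as [h [h1 h2]]. destruct (IHa g Hga Hwg) as [k [k1 k2]].
    exists (fun p => k (h (fst p), h (snd p))). split.
    + intros p [p1 p2]. eapply lt_trans; [apply (k1 (h (fst p), h (snd p))) | exact Hga].
      split; simpl; apply h1; auto.
    + intros [x1 x2] [y1 y2] [hx1 hx2] [hy1 hy2] E. simpl in *.
      apply k2 in E; [|split; simpl; apply h1; auto..].
      injection E as E1 E2. apply h2 in E1; auto. apply h2 in E2; auto. congruence.
  -
    assert (Hlim : forall y, lt y a -> exists z, lt y z /\ lt z a).
    { intros y Hy. apply NNPP; intro Hn.
      assert (Hyz : forall z, ~ (lt y z /\ lt z a)) by (intros z Hz; apply Hn; eauto).
      destruct (classic (lt y w)) as [Hyw|Hyw].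
      - apply (Hyz w). auto.
      - apply not_lt_le in Hyw.
        apply H2. exists y. split; auto. split; auto.
        exists (fun x => if excluded_middle_informative (x = y) then zz
                 else if excluded_middle_informative (lt x w) then succ x else x).
        split.
        + intros x Hx. unfold seg in *.
          destruct excluded_middle_informative as [e|e].
          { eapply lt_le_trans; [apply zz_lt_w| auto]. }
          destruct excluded_middle_informative as [e2|e2].
          { eapply lt_le_trans; [apply succ_lt_w; auto| auto]. }
          destruct (lt_tri x y) as [h|[h|h]]; [auto|tauto|].
          exfalso. apply (Hyz x). auto.
        + intros x x' Hx Hx'. unfold seg in *.
          assert (Hs : forall u, lt u w -> zz <> succ u).
          { intros u Hu E. pose proof (succ_gt_w u Hu) as Hl. rewrite <- E in Hl.
            apply (lt_not_le _ _ Hl). apply zz_least. }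
          assert (Hz : forall u, ~ lt u w -> zz <> u).
          { intros u Hu E. apply Hu. rewrite <- E. apply zz_lt_w. }
          assert (Hsu : forall u u', lt u w -> ~ lt u' w -> succ u <> u').
          { intros u u' Hu Hu' E. apply Hu'. rewrite <- E. apply succ_lt_w; auto. }
          assert (Hss : forall u u', lt u w -> lt u' w -> succ u = succ u' -> u = u').
          { intros u u' Hu Hu' E. destruct (lt_tri u u') as [h|[h|h]]; auto; exfalso.
            - destruct (succ_spec u) as [_ s2]; [eauto|].
              pose proof (s2 u' h) as h'. rewrite E in h'.
              apply (lt_not_le _ _ (succ_gt_w u' Hu') h').
            - destruct (succ_spec u') as [_ s2]; [eauto|].
              pose proof (s2 u h) as h'. rewrite <- E in h'.
              apply (lt_not_le _ _ (succ_gt_w u Hu) h'). }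
          repeat destruct excluded_middle_informative; intros E; subst; auto;
            try (exfalso; eauto; fail).
          all: try (exfalso; eapply Hs; eauto; fail).
          all: try (exfalso; eapply Hs; symmetry; eauto; fail).
          all: try (exfalso; eapply Hz; eauto; fail).
          all: try (exfalso; eapply Hsu; eauto; fail).
          all: try (exfalso; eapply Hsu; [| |symmetry]; eauto; fail).
          all: try (exfalso; eapply Hz; [|symmetry]; eauto; fail). }
    (* collapse *)
    assert (Inv : forall p, sq a p ->
              (forall q, god q p -> lt (Fgod q) (Fgod p)) /\ lt (Fgod p) a /\
              (forall t, lt t (Fgod p) -> exists q, god q p /\ Fgod q = t)).
    { intro p. induction p as [p IHp] using (well_founded_ind god_wf). intros Hp.
      assert (Hqa : forall q, god q p -> sq a q).
      { intros q Hq. apply gm_sq. eapply le_lt_trans; [apply god_le; eauto| apply sq_gm; auto]. }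
      assert (Hbd : exists t, forall q, god q p -> lt (Fgod q) t).
      { exists a. intros q Hq. apply (IHp q Hq (Hqa q Hq)). }
      destruct (leastT_spec w_inh _ Hbd) as [L1 L2]. rewrite <- Fgod_eq in L1, L2.
      assert (Hdc : forall t, lt t (Fgod p) -> exists q, god q p /\ Fgod q = t).
      { intros t Ht. apply NNPP; intro Hn.
        assert (Hb : forall q, god q p -> lt (Fgod q) t).
        { intros q Hq. apply NNPP; intro Hn2. apply not_lt_le in Hn2.
          destruct Hn2 as [E|Hlt]. apply Hn; eauto.
          destruct (IHp q Hq (Hqa q Hq)) as [_ [_ D]]. destruct (D t Hlt) as [q' [Hq' Eq']].
          apply Hn. exists q'. split; auto. eapply god_trans; eauto. }
        apply (lt_not_le _ _ Ht). apply L2. auto. }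
      split; [auto| split; [|auto]].
      apply NNPP; intro Hna. apply not_lt_le in Hna.
      set (gam := if excluded_middle_informative (lt (gm p) w) then w else succ (gm p)).
      assert (Hgm : lt (gm p) a) by (apply sq_gm; auto).
      assert (Hsa : lt (gm p) (succ (gm p)) /\ lt (succ (gm p)) a).
      { destruct (Hlim _ Hgm) as [z [z1 z2]]. destruct (succ_spec (gm p)) as [s1 s2]; eauto.
        split; [exact s1| eapply le_lt_trans; [apply s2; exact z1| exact z2]]. }
      assert (Hgam : le lt w gam /\ lt gam a /\ forall q, god q p -> sq gam q).
      { unfold gam; destruct excluded_middle_informative as [e|e]; split; try split.
        - left; auto.
        - auto.
        - intros q Hq. apply gm_sq. eapply le_lt_trans; [apply god_le; eauto| auto].
        - apply not_lt_le in e. eapply le_trans; [exact e| right; apply Hsa].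
        - apply Hsa.
        - intros q Hq. apply gm_sq. eapply le_lt_trans; [apply god_le; eauto| apply Hsa]. }
      destruct Hgam as [G1 [G2 G3]].
      apply H2. exists gam. split; auto. split; auto.
      eapply injP_trans; [| apply (IHa gam G2 G1)].
      exists (fun t => epsilon (inhabits p) (fun q => god q p /\ Fgod q = t)). split.
      - intros t Ht. apply G3.
        assert (E := epsilon_spec (inhabits p) (fun q => god q p /\ Fgod q = t)).
        apply E. apply Hdc. eapply lt_le_trans; eauto.
      - intros t t' Ht Ht' E.
        assert (E1 := epsilon_spec (inhabits p) (fun q => god q p /\ Fgod q = t)).
        assert (E2 := epsilon_spec (inhabits p) (fun q => god q p /\ Fgod q = t')).
        destruct E1 as [_ E1]. apply Hdc; eapply lt_le_trans; eauto.
        destruct E2 as [_ E2]. apply Hdc; eapply lt_le_trans; eauto.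
        rewrite <- E1, <- E2, E. auto. }
    exists Fgod. split.
    + intros p Hp. apply Inv; auto.
    + intros p q Hp Hq E. apply NNPP; intro Hne.
      destruct (god_tri p q Hne) as [h|h].
      * pose proof (proj1 (Inv q Hq) p h). rewrite E in H. exact (lt_irr _ H).
      * pose proof (proj1 (Inv p Hp) q h). rewrite E in H. exact (lt_irr _ H).
Qed.

Section Constr.
Context (kappa : T) (Sf : T -> T -> Prop) (C : T -> T -> T -> Prop).
Context (Hwk : lt w kappa)
 (Hdisj : forall i j d, lt i kappa -> lt j kappa -> i <> j -> Sf i d -> Sf j d -> False)
 (Hcof : forall i d, lt i kappa -> Sf i d -> cof lt d kappa)
 (Hclub : forall i d, lt i kappa -> Sf i d -> club_in lt (C i d) d)
 (Hotp : forall i d, lt i kappa -> Sf i d -> otp_eq lt (C i d) kappa).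

Definition Hch (i d : T) : T -> T :=
  epsilon (inhabits (fun x : T => x)) (fun h => forall y, C i d y -> exists x, lt x kappa /\ h x = y).
Lemma Hch_spec i d : lt i kappa -> Sf i d -> forall y, C i d y -> exists x, lt x kappa /\ Hch i d x = y.
Proof.
  intros Hi Hd. unfold Hch. apply epsilon_spec.
  destruct (Hotp i d Hi Hd) as [h [_ [_ h3]]]. exists h. exact h3.
Qed.
Definition cd (i d y : T) : T := epsilon (inhabits w) (fun x => lt x kappa /\ Hch i d x = y).
Lemma cd_spec i d y : lt i kappa -> Sf i d -> C i d y -> lt (cd i d y) kappa /\ Hch i d (cd i d y) = y.
Proof. intros. unfold cd. apply epsilon_spec. apply Hch_spec; auto. Qed.

Section B.
Context (b : T) (Hb : is_limit lt b) (nu : T) (Hwnu : le lt w nu) (Hknu : le lt kappa nu).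
Context (HH : T * T -> T) (HH1 : forall p, sq nu p -> seg lt nu (HH p))
  (HH2 : forall p q, sq nu p -> sq nu q -> HH p = HH q -> p = q).
Context (r : T) (f : T -> T) (Hrnu : le lt r nu) (Hf1 : forall x, lt x r -> lt (f x) b)
  (Hf2 : forall y, lt y b -> exists x, lt x r /\ le lt y (f x)).

Definition code2 (k : nat) (v : T) := HH (emb k, v).
Lemma code2_lt k v : lt v nu -> lt (code2 k v) nu.
Proof. intros H. apply HH1. split; simpl; auto. eapply lt_le_trans; [apply emb_lt_w| auto]. Qed.
Lemma code2_inj k k' v v' : lt v nu -> lt v' nu -> code2 k v = code2 k' v' -> k = k' /\ v = v'.
Proof.
  intros H H' E. apply HH2 in E; [| split; simpl; auto; eapply lt_le_trans; [apply emb_lt_w| auto]..].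
  injection E as E1 E2. split; auto. apply emb_inj; auto.
Qed.

Lemma union_inj (A B : T -> Prop) : injP A (seg lt nu) -> injP (fun x => B x /\ ~ A x) (seg lt nu) ->
  injP (fun x => A x \/ B x) (seg lt nu).
Proof.
  intros [g [g1 g2]] [h [h1 h2]].
  exists (fun x => if excluded_middle_informative (A x) then code2 0 (g x) else code2 1 (h x)).
  split.
  - intros x Hx. unfold seg. destruct excluded_middle_informative; apply code2_lt.
    + apply g1; auto.
    + apply h1. destruct Hx; tauto.
  - intros x y Hx Hy. destruct excluded_middle_informative as [a|a];
      destruct excluded_middle_informative as [a'|a']; intros E.
    + apply code2_inj in E; try apply g1; auto. apply g2; tauto.
    + apply code2_inj in E; [discriminate (proj1 E)| apply g1; auto | apply h1; destruct Hy; tauto].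
    + apply code2_inj in E; [discriminate (proj1 E)| apply h1; destruct Hx; tauto | apply g1; auto].
    + apply code2_inj in E; [| apply h1; destruct Hx; tauto | apply h1; destruct Hy; tauto].
      apply h2; [destruct Hx; tauto | destruct Hy; tauto | tauto].
Qed.

Lemma cstep_inj (D : T -> Prop) : injP D (seg lt nu) ->
  injP (fun y => exists i d, lt i kappa /\ Sf i d /\ D d /\ C i d y) (seg lt nu).
Proof.
  intros [g [g1 g2]].
  set (pd := fun y => epsilon (inhabits (w, w))
     (fun p => lt (fst p) kappa /\ Sf (fst p) (snd p) /\ D (snd p) /\ C (fst p) (snd p) y)).
  assert (Hpd : forall y, (exists i d, lt i kappa /\ Sf i d /\ D d /\ C i d y) ->
     lt (fst (pd y)) kappa /\ Sf (fst (pd y)) (snd (pd y)) /\ D (snd (pd y)) /\ C (fst (pd y)) (snd (pd y)) y).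
  { intros y [i [d H]]. unfold pd. apply epsilon_spec. exists (i, d). exact H. }
  exists (fun y => HH (g (snd (pd y)), cd (fst (pd y)) (snd (pd y)) y)). split.
  - intros y Hy. destruct (Hpd y Hy) as [p1 [p2 [p3 p4]]]. apply HH1. split; simpl.
    + apply g1; auto.
    + eapply lt_le_trans; [apply cd_spec; auto| auto].
  - intros y y' Hy Hy' E.
    destruct (Hpd y Hy) as [p1 [p2 [p3 p4]]]. destruct (Hpd y' Hy') as [q1 [q2 [q3 q4]]].
    apply HH2 in E.
    2:{ split; simpl. apply g1; auto. eapply lt_le_trans; [apply cd_spec; auto| auto]. }
    2:{ split; simpl. apply g1; auto. eapply lt_le_trans; [apply cd_spec; auto| auto]. }
    injection E as E1 E2. apply g2 in E1; auto.
    destruct (pd y) as [i d] eqn:Ey. destruct (pd y') as [i' d'] eqn:Ey'. simpl in *. subst d'.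
    assert (i = i') as <-.
    { apply NNPP; intro Hne. eapply Hdisj; eauto. }
    destruct (cd_spec i d y) as [_ c1]; auto. destruct (cd_spec i d y') as [_ c2]; auto.
    rewrite <- c1, <- c2, E2. reflexivity.
Qed.

Lemma clos_inj (X : T -> Prop) : (forall x, lt x b -> exists y, X y /\ lt x y) -> injP X (seg lt nu) ->
  injP (fun y => X y \/ (lt y b /\ is_limit lt y /\ unbounded_below lt X y)) (seg lt nu).
Proof.
  intros Hun HX. apply union_inj; auto.
  eapply injP_trans; [| exact HX].
  exists (fun y => leastT w_inh (fun x => X x /\ lt y x)).
  assert (Hm : forall y, lt y b -> X (leastT w_inh (fun x => X x /\ lt y x)) /\
             lt y (leastT w_inh (fun x => X x /\ lt y x)) /\
             forall x, X x -> lt y x -> le lt (leastT w_inh (fun x => X x /\ lt y x)) x).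
  { intros y Hy. destruct (leastT_spec w_inh (fun x => X x /\ lt y x)) as [[L1 L2] L3].
    destruct (Hun y Hy) as [x [h1 h2]]. eauto. split; [exact L1|]. split; [exact L2|]. intros x h1 h2. apply L3; auto. }
  split.
  - intros y [[Hy _] _]. apply (proj1 (Hm y Hy)).
  - assert (Key : forall y y', (lt y b /\ is_limit lt y /\ unbounded_below lt X y) /\ ~ X y ->
        (lt y' b /\ is_limit lt y' /\ unbounded_below lt X y') /\ ~ X y' -> lt y y' ->
        lt (leastT w_inh (fun x => X x /\ lt y x)) (leastT w_inh (fun x => X x /\ lt y' x))).
    { intros y y' [[Hy [_ _]] _] [[Hy' [_ Hu']] _] Hlt.
      destruct (Hu' y Hlt) as [x [x1 [x2 x3]]].
      eapply le_lt_trans; [apply (proj2 (proj2 (Hm y Hy))); eauto|].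
      eapply lt_trans; [exact x3| apply (proj1 (proj2 (Hm y' Hy')))]. }
    intros y y' H H' E. destruct (lt_tri y y') as [h|[h|h]]; auto; exfalso.
    + pose proof (Key y y' H H' h) as K. rewrite E in K. exact (lt_irr _ K).
    + pose proof (Key y' y H' H h) as K. rewrite E in K. exact (lt_irr _ K).
Qed.


Definition X0 (y : T) : Prop :=
  (exists x, lt x r /\ f x = y) \/ (exists i d, lt i kappa /\ Sf i d /\ d = b /\ C i d y).

Fixpoint Xn (n : nat) : T -> Prop :=
  match n with
  | 0%nat => X0
  | Datatypes.S n => fun y => lt y b /\
      ((Xn n y \/ (lt y b /\ is_limit lt y /\ unbounded_below lt (Xn n) y)) \/
       exists i d, lt i kappa /\ Sf i d /\ Xn n d /\ C i d y)
  end.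

Lemma X0_lt y : X0 y -> lt y b.
Proof.
  intros [[x [h1 <-]]|[i [d [h1 [h2 [<- h3]]]]]]. auto.
  apply (Hclub i d h1 h2); auto.
Qed.
Lemma Xn_lt n y : Xn n y -> lt y b.
Proof. destruct n; simpl. apply X0_lt. tauto. Qed.
Lemma X0_Xn n y : X0 y -> Xn n y.
Proof. induction n; simpl; auto. intros H. split. apply X0_lt; auto. auto. Qed.
Lemma X0_unb x : lt x b -> exists y, X0 y /\ lt x y.
Proof.
  intros Hx. destruct Hb as [_ Hl]. destruct (Hl x Hx) as [z [z1 z2]].
  destruct (Hf2 z z2) as [u [u1 u2]]. exists (f u). split.
  left; eauto. eapply lt_le_trans; eauto.
Qed.

Lemma X0_size : injP X0 (seg lt nu).
Proof.
  apply union_inj.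
  - exists (fun y => epsilon (inhabits w) (fun x => lt x r /\ f x = y)). split.
    + intros y Hy. unfold seg. eapply lt_le_trans; [apply (epsilon_spec (inhabits w) _ Hy)| auto].
    + intros y y' Hy Hy' E. destruct (epsilon_spec (inhabits w) _ Hy) as [_ e1].
      destruct (epsilon_spec (inhabits w) _ Hy') as [_ e2]. rewrite <- e1, <- e2, E. auto.
  - eapply injP_sub; [| apply (cstep_inj (fun d => d = b))].
    + intros y [[i [d [h1 [h2 [h3 h4]]]]] _]. exists i, d. auto.
    + exists (fun _ => w). split. intros; unfold seg. eapply lt_le_trans; [apply Hwk| auto].
      intros x y -> ->. auto.
Qed.

Lemma Xn_size n : injP (Xn n) (seg lt nu).
Proof.
  induction n; simpl. apply X0_size.
  eapply injP_sub; [| apply union_inj; [apply clos_inj; [| exact IHn]|]].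
  - intros y [_ H]. exact H.
  - intros x Hx. destruct (X0_unb x Hx) as [y [h1 h2]]. exists y. split; auto. apply X0_Xn; auto.
  - eapply injP_sub; [| apply (cstep_inj (Xn n) IHn)]. tauto.
Qed.

Definition Xw (y : T) : Prop := exists n, Xn n y.

Lemma Xw_size : injP Xw (seg lt nu).
Proof.
  set (G := fun n => epsilon (inhabits (fun x : T => x))
     (fun g => (forall x, Xn n x -> seg lt nu (g x)) /\ (forall x y, Xn n x -> Xn n y -> g x = g y -> x = y))).
  assert (HG : forall n, (forall x, Xn n x -> seg lt nu (G n x)) /\ (forall x y, Xn n x -> Xn n y -> G n x = G n y -> x = y)).
  { intro n. unfold G. apply epsilon_spec. apply Xn_size. }
  set (N := fun y => epsilon (inhabits 0%nat) (fun n => Xn n y)).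
  exists (fun y => code2 (N y) (G (N y) y)). split.
  - intros y Hy. unfold seg. apply code2_lt. apply HG. apply (epsilon_spec (inhabits 0%nat) _ Hy).
  - intros y y' Hy Hy' E. pose proof (epsilon_spec (inhabits 0%nat) _ Hy) as e1. pose proof (epsilon_spec (inhabits 0%nat) _ Hy') as e2.
    fold (N y) in e1. fold (N y') in e2.
    apply code2_inj in E; [| apply HG; auto ..]. destruct E as [E1 E2].
    rewrite <- E1 in E2, e2. apply (proj2 (HG (N y))); auto.
Qed.

Definition ee (y : T) : Prop := lt y b /\ (Xw y \/ (lt y b /\ is_limit lt y /\ unbounded_below lt Xw y)).

Lemma ee_size : injP ee (seg lt nu).
Proof.
  eapply injP_sub; [| apply clos_inj; [| exact Xw_size]].
  - intros y [_ H]. exact H.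
  - intros x Hx. destruct (X0_unb x Hx) as [y [h1 h2]]. exists y. split; auto. exists 0%nat. auto.
Qed.

Lemma Xw_lt y : Xw y -> lt y b.
Proof. intros [n H]. eapply Xn_lt; eauto. Qed.

Lemma ee_club : club_in lt ee b.
Proof.
  split; [| split].
  - intros x [H _]; auto.
  - intros x Hx. destruct (X0_unb x Hx) as [y [h1 h2]]. exists y. split; [|split; auto].
    + split. apply X0_lt; auto. left. exists 0%nat. auto.
    + apply X0_lt; auto.
  - intros g Hg Hl Hu. split; auto. right. split; auto. split; auto.
    intros x Hx. destruct (Hu x Hx) as [y [[Hyb [Hy|[_ [_ Hyu]]]] [h1 h2]]].
    + exists y; auto.
    + destruct (Hyu x h1) as [y' [y1 [y2 y3]]]. exists y'. split; auto. split; auto.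
      eapply lt_trans; eauto.
Qed.

Lemma ee_closed i d : lt i kappa -> Sf i d -> (ee d \/ d = b) -> forall x, C i d x -> ee x.
Proof.
  intros Hi Hd Hdd x Hx.
  assert (Hxd : lt x d) by (apply (Hclub i d Hi Hd); auto).
  assert (InX : forall n, Xn n d -> ee x).
  { intros n Hn. assert (lt x b) by (eapply lt_trans; [exact Hxd| eapply Xn_lt; eauto]).
    split; auto. left. exists (Datatypes.S n). simpl. split; auto. right. exists i, d. auto. }
  destruct Hdd as [[Hdb [[n Hn]|[_ [Hdl Hdu]]]]| ->].
  - eauto.
  - destruct (classic (exists n, unbounded_below lt (Xn n) d)) as [[n Hn]|Hno].
    + apply (InX (Datatypes.S n)). simpl. split; auto.
    + exfalso.
      assert (Hxs : forall n, exists x, lt x d /\ forall y, Xn n y -> lt x y -> ~ lt y d).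
      { intro n. apply NNPP; intro Hc. apply Hno. exists n. intros u Hu.
        apply NNPP; intro Hc2. apply Hc. exists u. split; auto. intros y Hy h1 h2. apply Hc2. eauto. }
      set (xs := fun n => epsilon (inhabits w) (fun x => lt x d /\ forall y, Xn n y -> lt x y -> ~ lt y d)).
      assert (Hxs' : forall n, lt (xs n) d /\ forall y, Xn n y -> lt (xs n) y -> ~ lt y d).
      { intro n. apply epsilon_spec. apply Hxs. }
      destruct (Hcof i d Hi Hd) as [_ Hmin]. apply (Hmin w Hwk).
      exists (fun t => xs (Nw t)). split.
      * intros t Ht. apply Hxs'.
      * intros y Hy. destruct (Hdu y Hy) as [y' [[n Hn] [h1 h2]]].
        exists (emb n). split. apply emb_lt_w. rewrite Nw_emb.
        destruct (Hxs' n) as [_ K]. assert (~ lt (xs n) y') by (intro; eapply K; eauto).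
        apply not_lt_le in H. right. eapply lt_le_trans; eauto.
  - assert (lt x b) by (apply (Hclub i b Hi Hd); auto).
    split; auto. left. exists 0%nat. simpl. right. exists i, b. auto.
Qed.
End B.
End Constr.
End Om.
End W.

Lemma per_b {T : Type} (lt : T -> T -> Prop) (Hwo : well_order lt) (w : T) (Hw : is_omega lt w)
  (kappa : T) (Sf : T -> T -> Prop) (C : T -> T -> T -> Prop) (Hwk : lt w kappa)
  (Hdisj : forall i j d, lt i kappa -> lt j kappa -> i <> j -> Sf i d -> Sf j d -> False)
  (Hcof : forall i d, lt i kappa -> Sf i d -> cof lt d kappa)
  (Hclub : forall i d, lt i kappa -> Sf i d -> club_in lt (C i d) d)
  (Hotp : forall i d, lt i kappa -> Sf i d -> otp_eq lt (C i d) kappa)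
  (b : T) (Hb : is_limit lt b) :
  exists E : T -> Prop, club_in lt E b /\
    (exists r, cof lt b r /\ card_le_sum E (seg lt r) (seg lt kappa)) /\
    (forall i d, lt i kappa -> Sf i d -> (E d \/ d = b) -> forall x, C i d x -> E x).
Proof.
  destruct (least_ex lt Hwo (fun r => cofinal_map lt r b)) as [r [Hr Hrmin]].
  { exists b. exists (fun x => x). split; auto. intros y Hy. exists y. split; auto. left; auto. }
  destruct Hr as [f [Hf1 Hf2]].
  assert (Hcofb : cof lt b r).
  { split. exists f; auto. intros r' h1 h2. exact (Hrmin r' h2 h1). }
  set (nu := if excluded_middle_informative (lt r kappa) then kappa else r).
  assert (Hn : le lt w nu /\ le lt kappa nu /\ le lt r nu).
  { unfold nu. destruct excluded_middle_informative as [e|e].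
    - split; [right; auto| split; [left; auto| right; auto]].
    - apply (not_lt_le lt Hwo) in e.
      split; [eapply (le_trans lt Hwo); [right; exact Hwk| exact e]| split; [exact e| left; auto]]. }
  destruct Hn as [N1 [N2 N3]].
  destruct (hess lt Hwo w Hw nu N1) as [HH [HH1 HH2]].
  exists (ee lt kappa Sf C b r f). split; [| split].
  - eapply ee_club; eauto.
  - exists r. split; auto.
    destruct (ee_size lt Hwo w Hw kappa Sf C Hwk Hdisj Hclub Hotp b Hb nu N1 N2 HH HH1 HH2 r f N3 Hf1 Hf2)
      as [g [g1 g2]].
    unfold nu in g1. destruct excluded_middle_informative as [e|e].
    + exists (fun u => inr (exist _ (g (proj1_sig u)) (g1 _ (proj2_sig u)))).
      intros [u pu] [v pv] E. injection E as E. simpl in E. apply g2 in E; auto. subst.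
      f_equal. apply proof_irrelevance.
    + exists (fun u => inl (exist _ (g (proj1_sig u)) (g1 _ (proj2_sig u)))).
      intros [u pu] [v pv] E. injection E as E. simpl in E. apply g2 in E; auto. subst.
      f_equal. apply proof_irrelevance.
  - intros i d Hi Hd. eapply ee_closed; eauto.
Qed.

Theorem claim3p2 (T : Type) (lt : T -> T -> Prop) (mu kappa : T)
  (S : T -> T -> Prop) (C : T -> T -> T -> Prop) :
  well_order lt ->
  (* lambda = T = mu^+, mu a cardinal *)
  is_successor_of lt mu ->
  (* mu singular with cf(mu) = kappa, aleph_0 < kappa *)
  cof lt mu kappa -> lt kappa mu ->
  (exists w, is_omega lt w /\ lt w kappa) ->
  (* S_i (i < kappa) pairwise disjoint stationary subsets of S^lambda_kappa *)
  (forall i j d, lt i kappa -> lt j kappa -> i <> j -> S i d -> S j d -> False) ->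
  (forall i, lt i kappa -> stationary lt (S i)) ->
  (forall i d, lt i kappa -> S i d -> cof lt d kappa) ->
  (* C^i is an S_i-club system with otp(C^i_delta) = kappa *)
  (forall i d, lt i kappa -> S i d -> club_in lt (C i d) d) ->
  (forall i d, lt i kappa -> S i d -> otp_eq lt (C i d) kappa) ->
  (* lambda \notin id_p(C^i, J^i) *)
  (forall i, lt i kappa ->
     ~ in_id_p lt (S i) (C i) (fun d => J_b lt mu (C i d) d) (fun _ => True)) ->
  exists e : T -> T -> Prop,
    (forall b, is_limit lt b ->
       club_in lt (e b) b /\
       exists r, cof lt b r /\ card_le_sum (e b) (seg lt r) (seg lt kappa)) /\
    (forall i b d, lt i kappa -> is_limit lt b -> S i d ->
       (e b d \/ d = b) -> forall x, C i d x -> e b x).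
Proof.
  intros Hwo _ _ _ [w [Hw Hwk]] Hdisj _ Hcof Hclub Hotp _.
  set (Good := fun b (E : T -> Prop) => is_limit lt b -> club_in lt E b /\
    (exists r, cof lt b r /\ card_le_sum E (seg lt r) (seg lt kappa)) /\
    (forall i d, lt i kappa -> S i d -> (E d \/ d = b) -> forall x, C i d x -> E x)).
  assert (HG : forall b, Good b (epsilon (inhabits (fun _ : T => False)) (Good b))).
  { intro b. apply epsilon_spec. destruct (classic (is_limit lt b)) as [L|L].
    - destruct (per_b lt Hwo w Hw kappa S C Hwk Hdisj Hcof Hclub Hotp b L) as [E HE].
      exists E. intros _. exact HE.
    - exists (fun _ => False). intro; contradiction. }
  exists (fun b => epsilon (inhabits (fun _ : T => False)) (Good b)). split.
  - intros b Hb. destruct (HG b Hb) as [h1 [h2 _]]. auto.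
  - intros i b d Hi Hb Hd. destruct (HG b Hb) as [_ [_ h3]]. apply h3; auto.
Qed.
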